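(* Let $n\ge 2$ and run Protocol 1 on $n$ nodes, one of which is initially in state $L_0$ and the remaining $n-1$ in state $F$. Then Protocol 1 stably constructs the graph language $\mathscr{T}=\{G : G \text{ is a tree rooted at the leader and every node } u \text{ has } \Delta^+(u)\le 2\}$, where $\Delta^+(u)$ is the number of children of $u$; moreover, under the uniform random scheduler, the execution stabilises to a spanning tree in $\mathscr{T}$ within $O(\log n)$ parallel time with high probability.
   Context: Network constructor model: there are $n$ nodes and every pair of nodes may interact. Each node has a state from a finite set $Q$; each of the $n(n-1)/2$ node pairs carries an edge state in $\{0,1\}$ (inactive/active), all initially $0$. At each discrete step the uniform random scheduler picks an unordered pair $\{u,v\}$ uniformly at random among all $n(n-1)/2$ pairs, independently of the past, and the two nodes and their edge are updated by the transition function $\delta:(a,b,c)\mapsto(a',b',c')$ (applicable with either ordering of the pair); any triple not listed as a rule is left unchanged. All states are output states, so the output graph of a configuration is the graph on all nodes whose edges are the active edges. An execution stabilises to a graph $G$ if from some step on the output graph is always (isomorphic to) $G$; the running time is the first such step, and parallel time is the number of steps divided by $n$. A protocol stably constructs a graph language $\mathscr{G}$ if every fair execution stabilises to a graph in $\mathscr{G}$ and every graph $G\in\mathscr{G}$ is the stabilised output of some execution on $|V(G)|$ nodes (an infinite execution is fair if whenever a configuration $C$ occurs infinitely often, every configuration reachable from $C$ in one step occurs infinitely often). ''With high probability'' means with probability at least $1-n^{-a}$ for an arbitrarily chosen constant $a>0$ (the time bound's constant depending on $a$). Protocol 1 (2-Slot protocol): $Q=\{F,L_0,L_1,L_2,O_0,O_1,O_2\}$,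 rules $(L_0,F,0)\to(L_1,O_0,1)$, $(L_1,F,0)\to(L_2,O_0,1)$, $(O_0,F,0)\to(O_1,O_0,1)$, $(O_1,F,0)\to(O_2,O_0,1)$. When such a rule fires, the node that moves from $F$ to $O_0$ becomes a child of the other node; the leader (initially $L_0$) is the root. *)

(* Defs.v *)
From Stdlib Require Import Reals.
From HB Require Import structures.
From mathcomp Require Import all_boot.
From mathcomp Require Import boolp.

Set Implicit Arguments.
Unset Strict Implicit.
Unset Printing Implicit Defensive.

Inductive Q := F | L0 | L1 | L2 | O0 | O1 | O2.

(* Transition function; [None] = not a listed rule (triple left unchanged). *)
Definition delta (a b : Q) (c : bool) : option (Q * Q * bool) :=
  match a, b, c with
  | L0, F, false => Some (L1, O0, true)
  | L1, F, false => Some (L2, O0, true)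
  | O0, F, false => Some (O1, O0, true)
  | O1, F, false => Some (O2, O0, true)
  | _, _, _ => None
  end.

(* A configuration on the n nodes 'I_n: a state per node and an edge state per
   pair; the edge state of the unordered pair {u,v} is stored symmetrically at
   (u,v) and (v,u) (all updates are symmetric, the initial one is all 0). *)
Record config (n : nat) := Config {
  st : {ffun 'I_n -> Q};
  ed : {ffun 'I_n * 'I_n -> bool} }.

(* Unordered pairs {u,v}, u <> v, represented as (u,v) with u < v. *)
Definition upair (n : nat) := {p : 'I_n * 'I_n | p.1 < p.2}.

Definition update n (C : config n) (u v : 'I_n) (a b : Q) (c : bool) : config n :=
  Config [ffun w => if w == u then a else if w == v then b else st C w]
         [ffun p => if (p == (u, v)) || (p == (v, u)) then c else ed C p].

Definition interact n (C : config n) (u v : 'I_n) : config n :=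
  match delta (st C u) (st C v) (ed C (u, v)) with
  | Some (a, b, c) => update C u v a b c
  | None =>
      match delta (st C v) (st C u) (ed C (u, v)) with
      | Some (a, b, c) => update C v u a b c
      | None => C
      end
  end.

Definition step n (C : config n) (p : upair n) : config n :=
  interact C (val p).1 (val p).2.

Definition init n (l : 'I_n) : config n :=
  Config [ffun w => if w == l then L0 else F] [ffun _ => false].

(* Output graph: all states are output states, edges = active edges. *)
Definition out n (C : config n) : rel 'I_n := fun u v => ed C (u, v).

Definition execution n (l : 'I_n) (C : nat -> config n) : Prop :=
  C 0 = init l /\ forall t, exists p : upair n, C t.+1 = step (C t) p.

Definition inf_often n (C : nat -> config n) (c : config n) : Prop :=
  forall N, exists t, N <= t /\ C t = c.

Definition fair n (C : nat -> config n) : Prop :=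
  forall c, inf_often C c -> forall p : upair n, inf_often C (step c p).

Definition iso_rooted n (G1 : rel 'I_n) (r1 : 'I_n) (G2 : rel 'I_n) (r2 : 'I_n) :
  Prop :=
  exists f : 'I_n -> 'I_n,
    bijective f /\ f r1 = r2 /\ forall u v, G1 u v = G2 (f u) (f v).

Definition rooted_tree n (G : rel 'I_n) (r : 'I_n) (par : 'I_n -> 'I_n) : Prop :=
  par r = r /\
  (forall v, exists k, iter k par v = r) /\
  (forall u v, G u v = ((u != r) && (par u == v)) || ((v != r) && (par v == u))).

Definition children n (r : 'I_n) (par : 'I_n -> 'I_n) (u : 'I_n) : {set 'I_n} :=
  [set v | (v != r) && (par v == u)].

Definition in_T n (G : rel 'I_n) (r : 'I_n) : Prop :=
  exists par, rooted_tree G r par /\ forall u, #|children r par u| <= 2.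

Definition stabilises_to n (l : 'I_n) (C : nat -> config n) (G : rel 'I_n)
  (r : 'I_n) : Prop :=
  exists t0, forall t, t0 <= t -> iso_rooted (out (C t)) l G r.

Fixpoint run n (l : 'I_n) (sigma : nat -> upair n) (t : nat) : config n :=
  match t with
  | 0 => init l
  | t'.+1 => step (run l sigma t') (sigma t')
  end.

(* Event, depending on the first T scheduler choices s, that the running time
   is at most T and the stabilised graph is in T: whatever the later choices,
   from some step t0 <= T on the output is always (isomorphic to) a fixed G in T. *)
Definition stab_by n (l : 'I_n) (T : nat) (s : {ffun 'I_T -> upair n}) : Prop :=
  exists t0, t0 <= T /\ exists G r, in_T G r /\
    forall sigma : nat -> upair n, (forall i : 'I_T, sigma i = s i) ->
      forall t, t0 <= t -> iso_rooted (out (run l sigma t)) l G r.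

Arguments stab_by {n} l T s.

(* Probability under the uniform random scheduler (first T choices i.i.d.
   uniform over the n(n-1)/2 pairs). *)
Definition prob_stab n (l : 'I_n) (T : nat) : R :=
  Rdiv (INR #|[set s : {ffun 'I_T -> upair n} | `[< stab_by l T s >] ]|)
       (INR #|{ffun 'I_T -> upair n}|).

(* Main.v *)
Require Import Defs.
From Stdlib Require Import Reals Lra Psatz.
From mathcomp Require Import all_boot.
Set Implicit Arguments. Unset Strict Implicit. Unset Printing Implicit Defensive.

Section Gsec.
Local Open Scope R_scope.

Lemma exp_le' (x y : R) : x <= y -> exp x <= exp y.
Proof. move=> H; case: (Rle_lt_or_eq_dec _ _ H) => [H1|->]; [left; exact: exp_increasing | lra]. Qed.

Lemma exp_pow' (y : R) (T : nat) : exp y ^ T = exp (INR T * y).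
Proof.
elim: T => [|T IH]; first by rewrite /= Rmult_0_l exp_0.
rewrite S_INR /= IH -exp_plus; f_equal; ring.
Qed.

Lemma real_bound (x a NN A : R) (T : nat) :
  2 <= x -> 0 < a -> 0 <= A -> 0 <= NN ->
  A * 2 * (2 * x) ^ T <= x * (x - 1) * (NN * (2 * x - 1)) ^ T ->
  2 * (a + 2) * x * ln x <= INR T ->
  A <= Rpower x (- a) * NN ^ T.
Proof.
move=> Hx Ha HA HN H Ht.
set q := (2 * x - 1) / (2 * x).
have HP : 0 < (2 * x) ^ T by apply: pow_lt; lra.
have Hq : 2 * x * q = 2 * x - 1 by rewrite /q; field; lra.
have HNT : 0 <= NN ^ T by apply: pow_le; lra.
have Hq0 : 0 <= q.
  rewrite /q; apply: Rmult_le_pos; [lra | left; apply: Rinv_0_lt_compat; lra].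
have HqT : 0 <= q ^ T by apply: pow_le; lra.
have H1 : A <= x * x * NN ^ T * q ^ T.
  have H' : (NN * (2 * x - 1)) ^ T = NN ^ T * ((2 * x) ^ T * q ^ T)
    by rewrite -Hq !Rpow_mult_distr; ring.
  rewrite H' in H.
  have H2 : A * 2 <= x * (x - 1) * (NN ^ T * q ^ T).
    apply: (Rmult_le_reg_r ((2 * x) ^ T)) => //.
    apply: (Rle_trans _ _ _ H); right; ring.
  have : 0 <= NN ^ T * q ^ T by apply: Rmult_le_pos; lra.
  nra.
have H3 : q ^ T <= exp (INR T * (- / (2 * x))).
  rewrite -exp_pow'; apply: pow_incr; split => //.
  have -> : q = 1 + - / (2 * x) by rewrite /q; field; lra.
  exact: exp_ineq1_le.
have Hl : 0 < ln x by rewrite -ln_1; apply: ln_increasing; lra.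
have H4 : INR T * (- / (2 * x)) <= (- (a + 2)) * ln x.
  have : INR T * / (2 * x) >= (a + 2) * ln x.
    apply: Rle_ge; apply: (Rmult_le_reg_r (2 * x)); first by lra.
    have -> : INR T * / (2 * x) * (2 * x) = INR T by field; lra.
    nra.
  lra.
have H5 : exp ((- (a + 2)) * ln x) = Rpower x (- (a + 2)) by [].
have H6 : x * x * Rpower x (- (a + 2)) = Rpower x (- a).
  have -> : - a = INR 2 + - (a + 2) by rewrite /=; ring.
  rewrite Rpower_plus Rpower_pow /=; [ring | lra].
have H7 : q ^ T <= Rpower x (- (a + 2)).
  rewrite -H5; apply: (Rle_trans _ _ _ H3); exact: exp_le'.
have : 0 <= x * x * NN ^ T by apply: Rmult_le_pos; nra.
rewrite -H6 => H8.
apply: (Rle_trans _ _ _ H1).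
nra.
Qed.

End Gsec.


From mathcomp Require Import all_order all_algebra zify ring lra.
From mathcomp Require Import boolp.


Definition isF (q : Q) : bool := if q is F then true else false.
Definition used (q : Q) : nat := match q with L1 | O1 => 1 | L2 | O2 => 2 | _ => 0 end.
Definition freeQ (q : Q) : nat := match q with L0 | O0 => 2 | L1 | O1 => 1 | _ => 0 end.
Definition hQ q : nat := freeQ q + isF q.

Lemma delta_some a b c r : delta a b c = Some r ->
  exists a', [/\ r = (a', O0, true), b = F, c = false &
     [/\ ~~ isF a, ~~ isF a', used a' = (used a).+1 & hQ a = (hQ a').+1]].
Proof.
by case: a; case: b; case: c => //= -[<-]; eexists; split.
Qed.

Lemma delta_none_F a c : isF a -> delta a F c = None /\ forall b, isF a -> delta a b c = None.
Proof. by case: a. Qed.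

Lemma sum_upd2 n (f g : 'I_n -> nat) u v : u != v ->
  (forall w, w != u -> w != v -> g w = f w) ->
  \sum_w g w + f u + f v = \sum_w f w + g u + g v.
Proof.
move=> uv H.
rewrite (bigD1 u) //= (bigD1 v) 1?eq_sym //=.
rewrite [in RHS](bigD1 u) //= [in RHS](bigD1 v) 1?eq_sym //=.
rewrite (eq_bigr f); first by lia.
by move=> w /andP[wu wv]; apply: H.
Qed.

Section Inv.
Variables (n : nat) (l : 'I_n).

Definition kk (C : config n) := #|[set w | ~~ isF (st C w)]|.
Definition ch (C : config n) (par : 'I_n -> 'I_n) (u : 'I_n) :=
  [set x | ~~ isF (st C x) && (x != l) && (par x == u)].

Definition Inv (C : config n) : Prop :=
  ~~ isF (st C l) /\ \sum_w hQ (st C w) = n.+1 /\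
  exists (par : 'I_n -> 'I_n) (d : 'I_n -> nat),
   [/\ par l = l, (forall v, v != l -> d (par v) < d v),
      (forall v, isF (st C v) -> par v = l),
      (forall v, v != l -> ~~ isF (st C v) -> ~~ isF (st C (par v))) &
      ((forall x y, ed C (x,y) = (~~ isF (st C x) && (x != l) && (par x == y))
                           || (~~ isF (st C y) && (y != l) && (par y == x))) /\
      (forall u, #|ch C par u| <= used (st C u)))].

Lemma Inv_init : Inv (init l).
Proof.
split; first by rewrite /init /= ffunE eqxx.
split.
  rewrite /init /= (bigD1 l) //= ffunE eqxx /=.
  rewrite (eq_bigr (fun _ => 1)); last by move=> i /negbTE il; rewrite ffunE il.
  rewrite sum1_card cardC1 card_ord.
  by case: n l => [[]|m] //.
exists (fun _ => l), (fun w => if w == l then 0 else 1); split => //.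
- by move=> v /negbTE ->; rewrite eqxx.
- by move=> v; rewrite /init /= ffunE; case: eqP => // ->.
split.
- move=> x y; rewrite /init /= !ffunE.
  by case: (eqVneq x l) => [_|xl]; case: (eqVneq y l) => [_|yl]; rewrite /= ?andbF.
- move=> u; suff -> : ch (init l) (fun _ => l) u = set0 by rewrite cards0.
  apply/setP => x; rewrite !inE /init /= ffunE.
  by case: eqP.
Qed.

Lemma attach C u v a : Inv C -> isF (st C v) -> ~~ isF (st C u) -> ~~ isF a ->
  used a = (used (st C u)).+1 -> hQ (st C u) = (hQ a).+1 ->
  Inv (update C u v a O0 true) /\ kk (update C u v a O0 true) = (kk C).+1.
Proof.
move=> [Hl [Hs [par [d [P1 P2 P3 P4 [P5 P6]]]]]] Fv Fu Fa Ua Ha.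
have uv : u != v by apply/eqP => E; rewrite E Fv in Fu.
have vl : v != l by apply/eqP => E; rewrite -E Fv in Hl.
set C' := update C u v a O0 true.
have stE w : st C' w = if w == u then a else if w == v then O0 else st C w.
  by rewrite /C' /update /= ffunE.
have edE x y : ed C' (x,y) = if ((x,y) == (u,v)) || ((x,y) == (v,u)) then true else ed C (x,y).
  by rewrite /C' /update /= ffunE.
have nfE w : ~~ isF (st C' w) = ~~ isF (st C w) || (w == v).
  rewrite stE; case: (eqVneq w u) => [->|wu]; first by rewrite Fu.
  by case: (eqVneq w v) => [->|wv]; rewrite ?orbT ?orbF.
split; last first.
  rewrite /kk.
  have -> : [set w | ~~ isF (st C' w)] = v |: [set w | ~~ isF (st C w)].
    by apply/setP => w; rewrite !inE nfE orbC.
  by rewrite cardsU1 inE Fv.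
split; first by rewrite nfE Hl.
split.
  have := @sum_upd2 _ (fun w => hQ (st C w)) (fun w => hQ (st C' w)) u v uv.
  rewrite [st C' u]stE [st C' v]stE eqxx eq_sym (negbTE uv) eqxx Ha Hs /=.
  have H2 : forall w, w != u -> w != v -> hQ (st C' w) = hQ (st C w) by move=> w wu wv; rewrite stE (negbTE wu) (negbTE wv).
  move=> /(_ H2) H.
  move: Fv; case: (st C v) H => // H _; move: H; rewrite /hQ /=; lia.
have parv w : ~~ isF (st C w) -> par w != v.
  move=> nw; apply/eqP => E.
  case: (eqVneq w l) => [wl|wl]; first by rewrite wl P1 in E; rewrite -E eqxx in vl.
  by have := P4 w wl nw; rewrite E Fv.
have parv' w : par w != v.
  case: (boolP (isF (st C w))) => [/P3 ->|]; first by rewrite eq_sym.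
  exact: parv.
exists (fun w => if w == v then u else par w), (fun w => if w == v then (d u).+1 else d w).
split.
- by rewrite eq_sym (negbTE vl).
- move=> w wl; case: (eqVneq w v) => [_|wv]; first by rewrite (negbTE uv).
  by rewrite (negbTE (parv' w)); apply: P2.
- move=> w; rewrite stE; case: (eqVneq w u) => [_|wu]; first by rewrite (negbTE Fa).
  by case: (eqVneq w v) => // wv /P3.
- move=> w wl; rewrite nfE; case: (eqVneq w v) => [_ _|wv]; first by rewrite nfE Fu.
  rewrite orbF => nw; rewrite nfE (P4 w wl nw) //.
split.
- move=> x y; rewrite edE !nfE P5 !xpair_eqE.
  have pv w : (par w == v) = false by apply/negbTE.
  have Ev : isF (st C v) = true by [].
  have uv' : (v == u) = false by rewrite eq_sym; apply/negbTE.
  have vl' : (v == l) = false by apply/negbTE.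
  case: (x =P v) => [?|/eqP xv]; case: (y =P v) => [?|/eqP yv];
  case: (x =P u) => [?|/eqP xu]; case: (y =P u) => [?|/eqP yu]; subst;
  rewrite ?eqxx in uv *; rewrite //= ?(eq_sym u y) ?(eq_sym u x) ?pv ?Ev ?uv' ?vl' ?(negbTE uv) ?(negbTE xv) ?(negbTE yv)
    ?(negbTE xu) ?(negbTE yu) /= ?andbF ?orbF ?andbT ?orbT //.
- move=> w.
  have sub : ch C' (fun w => if w == v then u else par w) w \subset
             (if w == u then v |: ch C par w else ch C par w).
    apply/subsetP => x; rewrite !inE nfE.
    case: (x =P v) => [->|/eqP xv].
      by rewrite orbT /= => /andP[_ /eqP <-]; rewrite eqxx !inE eqxx.
    rewrite orbF => H; case: eqP => _; rewrite ?inE H ?orbT //.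
  have := subset_leq_card sub; rewrite stE.
  case: (eqVneq w u) => [->|wu].
    rewrite cardsU1 Ua => H; apply: (leq_trans H).
    by have := P6 u; case: (_ \notin _) => /=; lia.
  case: (eqVneq w v) => [->|wv] H; last by apply: (leq_trans H).
  suff: ch C par v = set0 by move=> E; move: H; rewrite E cards0.
  apply/setP => x; rewrite !inE; apply/negP => /andP[/andP[nx xl] /eqP E].
  by have := P4 x xl nx; rewrite E Fv.
Qed.

End Inv.


Section B.
Variables (n : nat) (l : 'I_n).

Lemma Inv_edF C x y : Inv l C -> isF (st C x) -> ed C (x,y) = false /\ ed C (y,x) = false.
Proof.
move=> [Hl [_ [par [d [P1 _ P3 P4 [P5 _]]]]]] Fx.
have px w : ~~ isF (st C w) -> w != l -> par w != x.
  move=> nw wl; apply/eqP => E; have := P4 w wl nw; by rewrite E Fx.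
rewrite !P5 Fx /=; split.
  case: (boolP (~~ isF (st C y))) => //= ny; case: (eqVneq y l) => //= yl.
  by rewrite (negbTE (px y ny yl)).
rewrite ?andbF ?orbF.
case: (boolP (~~ isF (st C y))) => //= ny; case: (eqVneq y l) => //= yl.
by rewrite (negbTE (px y ny yl)).
Qed.

Lemma interact_cases C x y : Inv l C ->
  interact C x y = C \/ (Inv l (interact C x y) /\ kk (interact C x y) = (kk C).+1).
Proof.
move=> HI; rewrite /interact.
case E: (delta (st C x) (st C y) (ed C (x,y))) => [r|].
  have [a' [-> Fy _ [na na' Ua Ha]]] := delta_some E.
  by right; apply: attach => //; rewrite Fy.
case E2: (delta (st C y) (st C x) (ed C (x,y))) => [r|]; last by left.
have [a' [-> Fx _ [na na' Ua Ha]]] := delta_some E2.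
by right; apply: attach => //; rewrite Fx.
Qed.

Lemma kk_le (C : config n) : kk C <= n.
Proof. by rewrite /kk (leq_trans (max_card _)) // card_ord. Qed.

Lemma free_delta q : 0 < freeQ q -> exists a', delta q F false = Some (a', O0, true).
Proof. by case: q => //= _; eexists. Qed.

Lemma fire C x y : Inv l C -> isF (st C x) -> 0 < freeQ (st C y) ->
  kk (interact C x y) = (kk C).+1 /\ kk (interact C y x) = (kk C).+1.
Proof.
move=> HI Fx fy.
have [e1 e2] := Inv_edF y HI Fx.
have [a' Ea] := free_delta fy.
have Fx' : st C x = F by move: Fx; case: (st C x).
have ny : ~~ isF (st C y) by move: fy; case: (st C y).
have [a2 [[<-] _ _ [na na' Ua Ha]]] := delta_some Ea.
split; rewrite /interact.
  rewrite Fx' /= e1 Ea.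
  by have [] := attach HI Fx ny na' Ua Ha.
rewrite Fx' e2 Ea.
by have [] := attach HI Fx ny na' Ua Ha.
Qed.

Definition Fset (C : config n) := [set w | isF (st C w)].
Definition Free (C : config n) := [set w | 0 < freeQ (st C w)].

Lemma sum_bool (b : 'I_n -> bool) : \sum_w (b w : nat) = #|[set w | b w]|.
Proof.
rewrite -sum1dep_card [in RHS]big_mkcond /=; apply: eq_bigr => w _; by case: (b w).
Qed.

Lemma Fset_kk C : #|Fset C| + kk C = n.
Proof.
rewrite -[in RHS](card_ord n) -(cardsC [set w | isF (st C w)]).
rewrite /Fset /kk; congr (_ + _).
by apply: eq_card => w; rewrite !inE.
Qed.

Lemma free_count C : Inv l C -> kk C < 2 * #|Free C|.
Proof.
move=> [_ [Hs _]].
have H1 : \sum_w hQ (st C w) = \sum_w freeQ (st C w) + #|Fset C|.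
  by rewrite /hQ big_split /= sum_bool.
have H2 : \sum_w freeQ (st C w) <= \sum_w 2 * (0 < freeQ (st C w)).
  by apply: leq_sum => w _; case: (st C w).
rewrite -big_distrr /= sum_bool in H2.
set S := \sum_(w < n) freeQ (st C w) in H2.
have := Fset_kk C; rewrite /Free; rewrite -/S in H1; rewrite Hs in H1; lia.
Qed.

Definition fires (C : config n) := [set p : upair n | kk (step C p) == (kk C).+1].

Lemma fires_count C (p0 : upair n) : Inv l C -> #|Fset C| * #|Free C| <= #|fires C|.
Proof.
move=> HI.
pose phi (z : 'I_n * 'I_n) : upair n :=
  insubd p0 (if z.1 < z.2 then z else (z.2, z.1)).
have Hx z : z \in setX (Fset C) (Free C) -> z.1 != z.2.
  case: z => x y; rewrite !inE /= => /andP[Fx fy]; apply/eqP => E.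
  by move: Fx fy; rewrite E; case: (st C y).
have vphi z : z \in setX (Fset C) (Free C) ->
   val (phi z) = (if z.1 < z.2 then z else (z.2, z.1)).
  move=> /Hx zz; rewrite /phi insubdK //.
  case: ifP => //= /negbT; rewrite -leqNgt leq_eqVlt; case/orP => // /eqP/val_inj E; by rewrite E eqxx in zz.
rewrite -cardsX -(card_in_imset (f := phi)); last first.
  move=> [x y] [x' y'] H H' E.
  have := congr1 val E; rewrite (vphi _ H) (vphi _ H') /=.
  move: H H'; rewrite !inE /= => /andP[Fx fy] /andP[Fx' fy'].
  have nFy w : 0 < freeQ (st C w) -> isF (st C w) = false by case: (st C w).
  case: ifP; case: ifP => _ _ [] E1 E2; subst => //.
  - by rewrite nFy in Fx.
  - by rewrite nFy in Fx.
apply: subset_leq_card; apply/subsetP => p /imsetP[[x y] H ->].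
have := H; rewrite !inE /= => /andP[Fx fy].
rewrite /step (vphi _ H) /=.
have [f1 f2] := fire HI Fx fy.
by case: ifP => _ /=; rewrite ?f1 ?f2.
Qed.

End B.


Section Cfin.
Variables (n : nat) (l : 'I_n).

Lemma full_noF (C : config n) : kk C = n -> forall w, ~~ isF (st C w).
Proof.
move=> H w; have := Fset_kk C; rewrite H => E.
have /cards0_eq E0 : #|Fset C| = 0 by lia.
apply/negP => Fw; have : w \in Fset C by rewrite inE.
by rewrite E0 inE.
Qed.

Lemma step_full (C : config n) p : kk C = n -> step C p = C.
Proof.
move=> H; have nF := full_noF H.
rewrite /step /interact.
have D a b c : ~~ isF b -> delta a b c = None by case: a; case: b; case: c.
by rewrite !D.
Qed.

Lemma step_Inv (C : config n) p : Inv l C -> Inv l (step C p).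
Proof. by move=> HI; rewrite /step; case: (interact_cases (val p).1 (val p).2 HI) => [->|[]]. Qed.

Lemma step_kk (C : config n) p : Inv l C ->
  step C p = C \/ kk (step C p) = (kk C).+1.
Proof. by move=> HI; rewrite /step; case: (interact_cases (val p).1 (val p).2 HI) => [->|[]]; auto. Qed.

Lemma reach (par : 'I_n -> 'I_n) (d : 'I_n -> nat) :
  par l = l -> (forall v, v != l -> d (par v) < d v) ->
  forall v, exists k, iter k par v = l.
Proof.
move=> P1 P2.
suff H : forall m v, d v < m -> exists k, iter k par v = l by move=> v; apply: (H (d v).+1).
elim=> [//|m IH] v dv.
case: (eqVneq v l) => [->|vl]; first by exists 0.
have [|k Hk] := IH (par v); first by have := P2 v vl; lia.
by exists k.+1; rewrite iterSr.
Qed.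

Lemma final_inT (C : config n) : Inv l C -> kk C = n -> in_T (out C) l.
Proof.
move=> [_ [_ [par [d [P1 P2 P3 P4 [P5 P6]]]]]] H.
have nF := full_noF H.
exists par; split; first split => //.
  split; first exact: reach P1 P2.
  by move=> u v; rewrite /out P5 !nF.
move=> u; have -> : #|children l par u| = #|ch l C par u|.
  by apply: eq_card => x; rewrite !inE nF.
by apply: (leq_trans (P6 u)); case: (st C u).
Qed.

End Cfin.

Import Order.TTheory GRing.Theory Num.Theory.

Section D.
Variables (n : nat) (l : 'I_n).
Local Open Scope ring_scope.

Definition V (k : nat) : rat := (n - k)%:R / (k.+1)%:R.

Lemma V_ge0 k : 0 <= V k.
Proof. by rewrite /V divr_ge0 ?ler0n. Qed.

Lemma sum_ind (T : finType) (A : {set T}) : \sum_(p : T) ((p \in A)%:R : rat) = #|A|%:R.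
Proof.
rewrite (eq_bigr (fun p => if p \in A then 1 else 0)); last by move=> p _; case: (p \in A).
by rewrite -big_mkcond /= sumr_const.
Qed.

Lemma nat_ineq (k m N : nat) : (k < n)%N -> ((n - k) * k.+1 <= 2 * m)%N ->
  (2 * N <= n * n)%N -> (N * (n - k) * k.+2 <= 2 * n * m * n.+1)%N.
Proof.
move=> kn H1 H2.
have Hk : (n - k + k = n)%N by lia.
set a := (n - k)%N in H1 Hk *.
have H3 : (2 * N * a * k.+2 <= n * n * a * k.+2)%N by rewrite !leq_mul2r H2 !orbT.
have H4 : (n * k.+2 <= 2 * n.+1 * k.+1)%N by nia.
have H5 := leq_mul (leqnn (n * a)) H4.
have H6 := leq_mul (leqnn (2 * n * n.+1)) H1.
nia.
Qed.

Lemma drift (C : config n) (p0 : upair n) : Inv l C -> (2 * #|{: upair n}| <= n * n)%N ->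
  \sum_(p : upair n) V (kk (step C p)) <=
  #|{: upair n}|%:R * (1 - (2 * n)%:R^-1) * V (kk C).
Proof.
move=> HI HN.
set k := kk C; set N := #|{: upair n}|; set m := #|fires C|.
have E p : V (kk (step C p)) = V k - (p \in fires C)%:R * (V k - V k.+1).
  rewrite inE; case: (step_kk p HI) => ->; rewrite -/k.
    by rewrite (_ : (k == k.+1) = false) ?mul0r ?subr0 //; lia.
  by rewrite eqxx mul1r opprB addrC subrK.
rewrite (eq_bigr _ (fun p _ => E p)) sumrB sumr_const -big_distrl /= sum_ind -/m.
rewrite -[V k *+ _]mulr_natl (_ : #|xpredT| = N) //.
have [kn|nk] := ltnP k n; last first.
  have V0 j : (n <= j)%N -> V j = 0 by move=> nj; rewrite /V (_ : (n - j = 0)%N) ?mul0r //; lia.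
  by rewrite !V0 ?subr0 ?mulr0 ?sub0r ?oppr0 ?mul0rn // ltnW.
have fr := free_count HI.
have mc := fires_count p0 HI.
have fk := Fset_kk C.
have H1 : ((n - k) * k.+1 <= 2 * m)%N.
  have -> : (n - k = #|Fset C|)%N by rewrite -/k; lia.
  have := leq_mul (leqnn #|Fset C|) fr; rewrite -/k; nia.
have NI := nat_ineq kn H1 HN.
rewrite -(ler_nat rat) !natrM in NI.
have e1 : ((n - k)%:R : rat) = n%:R - k%:R by rewrite natrB // ltnW.
have e2 : ((n - k.+1)%:R : rat) = n%:R - k%:R - 1 by rewrite natrB // -addn1 natrD opprD addrA.
have e3 : ((k.+1)%:R : rat) = k%:R + 1 by rewrite -addn1 natrD.
have e4 : ((k.+2)%:R : rat) = k%:R + 2 by rewrite -addn2 natrD.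
have e5 : ((n.+1)%:R : rat) = n%:R + 1 by rewrite -addn1 natrD.
rewrite e1 e4 e5 in NI.
have n0 : (0 < n)%N by lia.
have Nn0 : (0 : rat) < n%:R by rewrite ltr0n.
have K0 : (0 : rat) <= k%:R by rewrite ler0n.
rewrite /V e1 e2 e3 e4 natrM.
set Nn := (n%:R : rat) in NI Nn0 *; set K := (k%:R : rat) in NI K0 *.
set M := (m%:R : rat) in NI *; set NN := (N%:R : rat) in NI *.
rewrite -subr_ge0.
have -> : NN * (1 - (2 * Nn)^-1) * ((Nn - K) / (K + 1)) -
    (NN * ((Nn - K) / (K + 1)) - M * ((Nn - K) / (K + 1) - (Nn - K - 1) / (K + 2))) =
    (2 * Nn * M * (Nn + 1) - NN * (Nn - K) * (K + 2)) / (2 * Nn * (K + 1) * (K + 2)).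
  by field; rewrite -/K -/Nn; apply/and3P; split; rewrite lt0r_neq0 //; lra.
apply: divr_ge0; first by rewrite subr_ge0.
rewrite !mulr_ge0 //; lra.
Qed.

End D.

Import Order.TTheory GRing.Theory Num.Theory.

Section E.
Local Open Scope ring_scope.
Variables (U : finType) (X : Type) (f : X -> U -> X) (P : X -> Prop) (W : X -> rat) (th : rat).
Hypotheses (Pf : forall x u, P x -> P (f x u)) (W0 : forall x, 0 <= W x) (th0 : 0 <= th)
  (Hd : forall x, P x -> \sum_u W (f x u) <= th * W x).

Lemma super T x : P x ->
  \sum_(s : {ffun 'I_T -> U}) W (foldl f x [seq s i | i <- enum 'I_T]) <= th ^+ T * W x.
Proof.
elim: T x => [|T IH] x Px.
  rewrite enum_ord0 /= sumr_const card_ffun card_ord expn0 expr0 mul1r.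
  by rewrite mulr1n.
pose h (z : U * {ffun 'I_T -> U}) : {ffun 'I_T.+1 -> U} :=
  [ffun i => if unlift ord0 i is Some j then z.2 j else z.1].
pose g (s : {ffun 'I_T.+1 -> U}) := (s ord0, [ffun j => s (lift ord0 j)]).
have hg : cancel g h.
  move=> s; apply/ffunP => i; rewrite /h /g ffunE.
  by case: unliftP => [j ->|->] /=; rewrite ?ffunE.
have gh : cancel h g.
  move=> [p s]; rewrite /h /g /= ffunE unlift_none; congr (_, _).
  by apply/ffunP => j; rewrite !ffunE liftK.
rewrite (reindex h); last by exists g => // z _.
rewrite -(pair_bigA _ (fun p s => W (foldl f x [seq h (p, s) i | i <- enum 'I_T.+1]))) /=.
apply: (le_trans (y := \sum_p th ^+ T * W (f x p))).
  apply: ler_sum => p _.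
  rewrite (eq_bigr (fun s : {ffun 'I_T -> U} => W (foldl f (f x p) [seq s i | i <- enum 'I_T]))).
    exact: IH (f x p) (Pf p Px).
  move=> s _.
  rewrite enum_ordSl /= ffunE unlift_none /= -map_comp; congr (W (foldl _ _ _)).
  by apply: eq_map => j; rewrite /= ffunE liftK.
rewrite -mulr_sumr exprSr -mulrA ler_wpM2l ?exprn_ge0 //.
exact: Hd.
Qed.
End E.

Import Order.TTheory GRing.Theory Num.Theory.

Section F.
Variables (n : nat) (l : 'I_n).

Lemma card_upair : (2 * #|{: upair n}| <= n * n)%N.
Proof.
rewrite card_sig.
set A := [set p : 'I_n * 'I_n | p.1 < p.2].
have -> : #|[pred p : 'I_n * 'I_n | p.1 < p.2]| = #|A|.
  by apply: eq_card => p; rewrite !inE.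

pose sw (p : 'I_n * 'I_n) := (p.2, p.1).
have swK : involutive sw by case.
have HB : #|sw @^-1: A| = #|A| by apply: card_preimset; apply: inv_inj.
have D : A :&: sw @^-1: A = set0.
  apply/setP => -[x y]; rewrite !inE /=; apply/negP => /andP[]; lia.
have := cardsU A (sw @^-1: A); rewrite D cards0 subn0 HB => E.
have := subset_leq_card (subsetT (A :|: sw @^-1: A)); rewrite cardsT card_prod card_ord; lia.
Qed.

Definition Cs T (s : {ffun 'I_T -> upair n}) := foldl (@step n) (init l) [seq s i | i <- enum 'I_T].

Lemma run_foldl sigma t : run l sigma t = foldl (@step n) (init l) [seq sigma i | i <- iota 0 t].
Proof.
elim: t => [//|t IH]; rewrite -addn1 iotaD map_cat foldl_cat -IH /=.
by rewrite addn1.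
Qed.

Lemma run_Cs T (s : {ffun 'I_T -> upair n}) (sigma : nat -> upair n) : (forall i : 'I_T, sigma i = s i) ->
  run l sigma T = Cs s.
Proof.
move=> H; rewrite run_foldl /Cs -val_enum_ord -map_comp; congr foldl.
by apply: eq_map => i /=.
Qed.

Lemma foldl_Inv C (ps : seq (upair n)) : Inv l C -> Inv l (foldl (@step n) C ps).
Proof. by elim: ps C => [//|p ps IH] C HC /=; apply: IH; apply: step_Inv. Qed.

Lemma Cs_Inv T (s : {ffun 'I_T -> upair n}) : Inv l (Cs s).
Proof. exact/foldl_Inv/Inv_init. Qed.

Lemma stab_full T (s : {ffun 'I_T -> upair n}) : kk (Cs s) = n -> stab_by l T s.
Proof.
move=> H; exists T; split => //; exists (out (Cs s)), l; split.
  exact: final_inT (Cs_Inv s) H.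
move=> sigma Hs t Tt.
suff -> : run l sigma t = Cs s.
  by exists id; split; [exists id | split].
elim: t Tt => [|t IH]; first by rewrite leqn0 => /eqP <-; apply: run_Cs.
rewrite leq_eqVlt => /orP[/eqP <-|]; first by apply: run_Cs.
by rewrite ltnS => /IH /= ->; apply: step_full.
Qed.

Local Open Scope ring_scope.

Lemma kk_init : kk (init l) = 1%N.
Proof.
rewrite /kk (_ : [set w | _] = [set l]) ?cards1 //.
by apply/setP => w; rewrite !inE /init /= ffunE; case: eqP.
Qed.

Lemma bound_rat (p0 : upair n) T :
  #|[set s : {ffun 'I_T -> upair n} | (kk (Cs s) < n)%N]|%:R * (n%:R)^-1
  <= (#|{: upair n}|%:R * (1 - (2 * n)%:R^-1)) ^+ T * V n (kk (init l)).
Proof.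
have n0 : (0 < n)%N by case: n l => [[]|].
have th0 : 0 <= #|{: upair n}|%:R * (1 - (2 * n)%:R^-1) :> rat.
  rewrite mulr_ge0 // subr_ge0 invf_le1 // ?ler1n ?ltr0n; lia.
have := @super _ _ (@step n) (Inv l) (fun C => V n (kk C)) _
   (fun x u Hx => step_Inv u Hx) th0
   (fun x Hx => drift p0 Hx card_upair) T (init l) (Inv_init l).
apply: le_trans.
rewrite -sum_ind big_distrl /=; apply: ler_sum => s _.
rewrite inE -/(Cs s); case: ltnP => /= H; last by rewrite mul0r V_ge0.
rewrite mul1r /V.
set k := kk (Cs s).
have Hk0 : (0 : rat) < k.+1%:R by rewrite ltr0n.
apply: (@le_trans _ _ (k.+1%:R^-1)).
  by rewrite lef_pV2 ?posrE ?ltr0n // ler_nat.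
rewrite ler_pdivlMr // mulVf ?ler1n ?subn_gt0 //.
by rewrite lt0r_neq0.
Qed.

End F.

Section F2.
Variables (n : nat) (l : 'I_n).
Local Open Scope ring_scope.

Lemma bound_nat (p0 : upair n) T :
  (#|[set s : {ffun 'I_T -> upair n} | (kk (Cs l s) < n)%N]| * 2 * (2 * n) ^ T
   <= n * (n - 1) * (#|{: upair n}| * (2 * n - 1)) ^ T)%N.
Proof.
have n0 : (0 < n)%N by case: n l => [[]|].
have := bound_rat l p0 T.
set A := #|_|; set N := #|{: upair n}|.
rewrite kk_init /V.
have Nn0 : (0 : rat) < n%:R by rewrite ltr0n.
rewrite ler_pdivrMr // => H.
rewrite -(ler_nat rat) !natrM !natrX !natrM natrB // natrB ?muln_gt0 // natrM.
apply: (le_trans (ler_wpM2r _ (ler_wpM2r _ H))); rewrite ?exprn_ge0 ?mulr_ge0 ?ler0n //.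
rewrite natrB // natrM.
rewrite (_ : (N%:R * (1 - (2 * n%:R)^-1)) = (N%:R * (2%:R * n%:R - 1)) / (2%:R * n%:R) :> rat); last first.
  by field; rewrite lt0r_neq0.
rewrite expr_div_n.
rewrite le_eqVlt; apply/orP; left; apply/eqP; field.
by rewrite expf_neq0 // mulf_neq0 // lt0r_neq0.
Qed.

End F2.


Lemma mono_stable (f : nat -> nat) B :
  (forall t, f t <= f t.+1) -> (forall t, f t <= B) ->
  exists t0, forall t, t0 <= t -> f t = f t0.
Proof.
move=> Hm Hb.
have Mon : forall g : nat -> nat, (forall t, g t <= g t.+1) -> forall s t, s <= t -> g s <= g t.
  move=> g Hg s t; elim: t => [|t IH]; first by rewrite leqn0 => /eqP ->.
  rewrite leq_eqVlt => /orP[/eqP ->//|]; rewrite ltnS => /IH H; exact: leq_trans H (Hg t).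
suff H : forall m (g : nat -> nat), (forall t, g t <= g t.+1) -> (forall t, g t <= B) ->
    B - g 0 <= m -> exists t0, forall t, t0 <= t -> g t = g t0.
  exact: H (B - f 0) f Hm Hb (leqnn _).
elim=> [|m IH] g Hg Hgb Hm0.
  exists 0 => t _; have := Mon g Hg 0 t (leq0n t); have := Hgb t; lia.
case: (pselect (exists t, g t != g 0)) => [[t Ht]|Hn]; last first.
  exists 0 => t _; apply/eqP; apply/negPn/negP => H; apply: Hn; by exists t.
have gt : g 0 < g t by have := Mon g Hg 0 t (leq0n t); move: Ht; lia.
have Hg' : forall s, g (t + s) <= g (t + s.+1) by move=> s; rewrite addnS; apply: Hg.
have Hgb' : forall s, g (t + s) <= B by move=> s; apply: Hgb.
have Hm' : B - g (t + 0) <= m by have := Hgb t; rewrite addn0; lia.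
have [t1 Ht1] := IH (fun s => g (t + s)) Hg' Hgb' Hm'.
exists (t + t1) => s Hs.
have := Ht1 (s - t) ltac:(lia); rewrite subnKC //; lia.
Qed.

Lemma step_noF n (C : config n) p : (forall w, ~~ isF (st C w)) -> step C p = C.
Proof.
move=> nF; rewrite /step /interact.
have D a b c : ~~ isF b -> delta a b c = None by case: a; case: b; case: c.
by rewrite !D.
Qed.

Lemma mk_p0 n : 1 < n -> upair n.
Proof.
move=> H1; have H0 : 0 < n by lia.
exact: (@exist _ (fun p : 'I_n * 'I_n => p.1 < p.2) (Ordinal H0, Ordinal H1) isT).
Defined.

Lemma part1 : forall (n : nat) (l : 'I_n), 2 <= n ->
     forall C : nat -> config n, execution l C -> fair C ->
       exists (G : rel 'I_n) (r : 'I_n), in_T G r /\ stabilises_to l C G r.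
Proof.
move=> n l n2 C [C0 HC] Hf.
have HI : forall t, Inv l (C t).
  elim=> [|t IH]; first by rewrite C0; exact: Inv_init.
  by have [p ->] := HC t; exact: step_Inv.
have Hk : forall t, kk (C t) <= kk (C t.+1).
  by move=> t; have [p ->] := HC t; case: (step_kk p (HI t)) => ->.
have [t0 Ht0] := @mono_stable (fun t => kk (C t)) n Hk (fun t => kk_le (C t)).
have Hc : forall t, t0 <= t -> C t = C t0.
  elim=> [|t IH]; first by rewrite leqn0 => /eqP <-.
  rewrite leq_eqVlt => /orP[/eqP <- //|]; rewrite ltnS => Ht.
  have [p E] := HC t.
  case: (step_kk p (HI t)) => E2; first by rewrite E E2 IH.
  have := Ht0 t.+1 (leqW Ht); have := Ht0 t Ht; rewrite /= E E2; lia.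
have Hfix : forall p, step (C t0) p = C t0.
  move=> p; have Hio : inf_often C (C t0).
    move=> N; exists (maxn N t0); split; first exact: leq_maxl.
    by apply: Hc; exact: leq_maxr.
  have [t [Ht E]] := Hf _ Hio p t0.
  by rewrite -E; apply: Hc.
have Hfull : kk (C t0) = n.
  have p0 := mk_p0 n2.
  have := fires_count p0 (HI t0); have := free_count (HI t0); have := Fset_kk (C t0).
  have -> : #|fires (C t0)| = 0.
    apply/eqP; rewrite cards_eq0; apply/eqP/setP => p; rewrite !inE Hfix; lia.
  nia.
exists (out (C t0)), l; split; first exact: final_inT (HI t0) Hfull.
exists t0 => t Ht; rewrite Hc //.
by exists id; split; [exists id | split].
Qed.


Definition mkQ (b : bool) (c : nat) : Q :=
  if b then (match c with 0 => L0 | 1 => L1 | _ => L2 end)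
  else (match c with 0 => O0 | 1 => O1 | _ => O2 end).

Lemma mkQ_delta b c : c < 2 -> delta (mkQ b c) F false = Some (mkQ b c.+1, O0, true).
Proof. by case: b; case: c => [|[|]]. Qed.

Lemma mkQ_nF b c : ~~ isF (mkQ b c).
Proof. by case: b; case: c => [|[|]]. Qed.

Lemma step_pair n (C : config n) u v a : u != v -> ed C (u,v) = ed C (v,u) ->
  isF (st C v) -> delta (st C u) (st C v) (ed C (u,v)) = Some (a, O0, true) ->
  exists p : upair n, step C p = update C u v a O0 true.
Proof.
move=> uv Es Fv Ed.
case: (ltngtP u v) => H.
- exists (@exist _ (fun p : 'I_n * 'I_n => p.1 < p.2) (u, v) H).
  by rewrite /step /interact /= Ed.
- exists (@exist _ (fun p : 'I_n * 'I_n => p.1 < p.2) (v, u) H).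
  rewrite /step /interact /=.
  have -> : delta (st C v) (st C u) (ed C (v, u)) = None by move: Fv; case: (st C v).
  by rewrite -Es Ed.
- by move: uv; rewrite (val_inj H) eqxx.
Qed.

Section J.
Variables (n : nat) (l : 'I_n) (par : 'I_n -> 'I_n) (d : 'I_n -> nat).
Hypotheses (P1 : par l = l) (P2 : forall v, v != l -> d (par v) < d v)
  (Pch : forall u, #|[set v | (v != l) && (par v == u)]| <= 2).

Definition cnt (S : {set 'I_n}) w := #|[set x in S | (x != l) && (par x == w)]|.
Definition stQ (S : {set 'I_n}) w := if w \in S then mkQ (w == l) (cnt S w) else F.
Definition edg (S : {set 'I_n}) x y :=
  ((x \in S) && (x != l) && (par x == y)) || ((y \in S) && (y != l) && (par y == x)).
Definition Rep (S : {set 'I_n}) (C : config n) :=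
  (forall w, st C w = stQ S w) /\ (forall x y, ed C (x,y) = edg S x y).

Lemma build_step (S : {set 'I_n}) v (C : config n) : v \in S -> v != l ->
  (forall x, x \in S -> x != l -> par x != v) -> par v \in S ->
  Rep (S :\ v) C -> exists p, Rep S (step C p).
Proof.
move=> vS vl leaf puS [Hst Hed].
have [u Eu] : exists u, par v = u by eexists.
rewrite Eu in puS.
have uv : u != v by apply/eqP => E; have := P2 vl; rewrite Eu E ltnn.
have uS' : u \in S :\ v by rewrite in_setD1 uv.
have vS' : v \notin S :\ v by rewrite in_setD1 eqxx.
have cntE : cnt S u = (cnt (S :\ v) u).+1.
  rewrite /cnt.
  have -> : [set x in S | (x != l) && (par x == u)] =
            v |: [set x in S :\ v | (x != l) && (par x == u)].
    apply/setP => x; rewrite !inE.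
    by case: (x =P v) => [->|_] /=; rewrite ?vS ?vl ?Eu ?eqxx.
  by rewrite cardsU1 !inE eqxx.
have c2 : cnt (S :\ v) u < 2.
  have : cnt S u <= 2.
    apply: leq_trans (Pch u); apply: subset_leq_card; apply/subsetP => x.
    by rewrite !inE => /andP[_ ->].
  by rewrite cntE.
have Fv : isF (st C v) by rewrite Hst /stQ (negbTE vS').
have pv x : x \in S -> (x != l) && (par x == v) = false.
  move=> xS; case: (eqVneq x l) => //= xl; exact/negbTE/leaf.
have Euv : ed C (u, v) = false.
  rewrite Hed /edg (negbTE vS') /= orbF.
  by rewrite -andbA pv // andbF.
have Es : ed C (u, v) = ed C (v, u) by rewrite !Hed /edg orbC.
have Ed : delta (st C u) (st C v) (ed C (u, v)) = Some (mkQ (u == l) (cnt (S :\ v) u).+1, O0, true).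
  rewrite Euv !Hst /stQ uS' (negbTE vS') /=.
  exact: mkQ_delta.
have [p Ep] := step_pair uv Es Fv Ed.
exists p; rewrite Ep; split.
- move=> w; rewrite /update /= ffunE.
  case: (w =P u) => [->|/eqP wu].
    by rewrite /stQ (subsetP (subD1set S v) _ uS') cntE.
  case: (w =P v) => [->|/eqP wv].
    rewrite /stQ vS (negbTE vl) (_ : cnt S v = 0) //.
    apply/eqP; rewrite cards_eq0; apply/eqP/setP => x; rewrite !inE.
    by case: (boolP (x \in S)) => //= xS; rewrite pv.
  rewrite Hst /stQ in_setD1 wv /=.
  case: (w \in S) => //; congr mkQ; rewrite /cnt; apply: eq_card => x.
  rewrite !inE; case: (x =P v) => [->|_] //=; rewrite vS Eu (negbTE vl) /=.
  by apply/esym/negbTE; rewrite eq_sym.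
- move=> x y; rewrite /update /= ffunE Hed /edg !in_setD1 !xpair_eqE.
  have Ev : (v \in S) = true by [].
  have vl' : (v != l) = true by [].
  have lv : (v == l) = false by apply/negbTE.
  have uv' : (v == u) = false by rewrite eq_sym; apply/negbTE.
  have pv' y0 : (y0 \in S) && (y0 != l) && (par y0 == v) = false.
    by case: (boolP (y0 \in S)) => //= yS; rewrite pv.
  move/eqP: Eu => Eub.
  case: (x =P v) => [?|/eqP xv]; case: (y =P v) => [?|/eqP yv];
  case: (x =P u) => [?|/eqP xu]; case: (y =P u) => [?|/eqP yu]; subst;
  rewrite ?eqxx in uv *; rewrite //= ?(eqP Eub) ?eqxx ?Ev ?vl' ?lv ?uv' ?(eq_sym u y) ?(eq_sym u x) ?(negbTE uv) ?(negbTE xv) ?(negbTE yv)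
    ?(negbTE xu) ?(negbTE yu) ?pv' /= ?andbF ?orbF ?andbT ?orbT //.
Qed.

Lemma build : forall S : {set 'I_n}, l \in S -> (forall x, x \in S -> par x \in S) ->
  exists ps : seq (upair n), Rep S (foldl (@step n) (init l) ps).
Proof.
suff H : forall m (S : {set 'I_n}), #|S| <= m -> l \in S -> (forall x, x \in S -> par x \in S) ->
  exists ps : seq (upair n), Rep S (foldl (@step n) (init l) ps).
  by move=> S; apply: (H #|S|).
elim=> [|m IH] S Sm lS cl.
  by move: Sm; rewrite leqn0 cards_eq0 => /eqP S0; rewrite S0 inE in lS.
case: (set_0Vmem (S :\ l)) => [E|[v0 Hv0]].
  have nS0 z : z \in S -> z != l -> False.
    by move=> zS zl; move/setP: E => /(_ z); rewrite in_setD1 zl zS inE.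
  exists [::]; split.
    move=> w; rewrite /= /init /= ffunE /stQ.
    have wS : (w \in S) = (w == l).
      case: (eqVneq w l) => [->//|wl]; apply/negbTE/negP => wS.
      exact: nS0 wS wl.
    rewrite wS; case: (eqVneq w l) => [->|//] /=.
    rewrite (_ : cnt S l = 0) //; apply/eqP; rewrite /cnt cards_eq0; apply/eqP/setP => x.
    rewrite !inE; case: (boolP (x \in S)) => //= xS; case: (eqVneq x l) => //= xl.
    by have := nS0 x xS xl.
  move=> x y; rewrite /= /init /= ffunE /edg.
  have nS z : (z \in S) && (z != l) = false.
    case: (eqVneq z l) => [_|zl]; first by rewrite andbF.
    apply/negbTE/negP => /andP[zS _]; have := nS0 z zS zl; done.
  by rewrite !nS.
case: (arg_maxnP d Hv0) => v Hv Hmax.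
move: (Hv) => /setD1P[vl vS].
have leaf x : x \in S -> x != l -> par x != v.
  move=> xS xl; apply/eqP => E.
  have xS' : x \in S :\ l by apply/setD1P.
  have := Hmax x xS'.
  have := P2 xl; rewrite E; lia.
have lS' : l \in S :\ v by rewrite in_setD1 lS eq_sym vl.
have cl' x : x \in S :\ v -> par x \in S :\ v.
  rewrite in_setD1 => /andP[xv xS]; rewrite in_setD1 cl // andbT.
  case: (eqVneq x l) => [->|xl]; first by rewrite P1 eq_sym.
  exact: leaf.
have Sm' : #|S :\ v| <= m.
  by move: Sm; rewrite (cardsD1 v S) vS.
have [ps Hps] := IH _ Sm' lS' cl'.
have [p Hp] := build_step vS vl leaf (cl v vS) Hps.
by exists (rcons ps p); rewrite foldl_rcons.
Qed.

End J.


Lemma part2 : forall (n : nat) (l : 'I_n), 2 <= n ->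
     forall (G : rel 'I_n) (r : 'I_n), in_T G r ->
       exists C : nat -> config n, execution l C /\ fair C /\ stabilises_to l C G r.
Proof.
move=> n l n2 G r [par [[Pr [Preach Pedge]] Pch]].
pose f w := if w == l then r else if w == r then l else w.
have fK : involutive f.
  move=> w; rewrite /f; case: (eqVneq w l) => [->|wl]; first by rewrite eqxx; case: (eqVneq r l).
  case: (eqVneq w r) => [->|wr]; first by rewrite eqxx; case: (eqVneq l r) => // <-.
  by rewrite (negbTE wl) (negbTE wr).
have finj : injective f := inv_inj fK.
have fl : f l = r by rewrite /f eqxx.
have fr : f r = l by rewrite -fl fK.
have feq a b : (f a == b) = (a == f b) by rewrite -{1}(fK b) (inj_eq finj).
pose par' w := f (par (f w)).
have P1 : par' l = l by rewrite /par' fl Pr fr.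
have iterE k v : iter k par' v = f (iter k par (f v)).
  elim: k => [|k IH] /=; first by rewrite fK.
  by rewrite IH /par' fK.
have Hex v : exists k, iter k par' v == l.
  have [k Hk] := Preach (f v); exists k; by rewrite iterE Hk fr.
pose d v := ex_minn (Hex v).
have P2 v : v != l -> d (par' v) < d v.
  move=> vl; rewrite /d.
  case: (ex_minnP (Hex v)) => m Hm Hmin.
  case: (ex_minnP (Hex (par' v))) => m' Hm' Hmin'.
  case: m Hm Hmin => [|m] Hm Hmin; first by move: Hm vl => /= /eqP ->; rewrite eqxx.
  by apply: Hmin'; rewrite -iterSr.
have Pch' u : #|[set v | (v != l) && (par' v == u)]| <= 2.
  have -> : [set v | (v != l) && (par' v == u)] = f @^-1: children r par (f u).
    apply/setP => v; rewrite !inE /par' feq.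
    by rewrite -fl (inj_eq finj).
  by rewrite card_preimset // Pch.
have [ps [Hst Hed]] := build P1 P2 Pch' (in_setT l) (fun x _ => in_setT (par' x)).
set Cf := foldl (@step n) (init l) ps in Hst Hed.
have nF w : ~~ isF (st Cf w) by rewrite Hst /stQ in_setT mkQ_nF.
have p0 := mk_p0 n2.
pose sigma i := nth p0 ps i.
have run0 : run l sigma (size ps) = Cf.
  by rewrite run_foldl /Cf -{2}(mkseq_nth p0 ps).
have runE t : size ps <= t -> run l sigma t = Cf.
  move=> /subnKC <-; elim: (t - size ps) => [|j IH]; first by rewrite addn0.
  by rewrite addnS /= IH step_noF.
exists (run l sigma); split; first by split => // t; exists (sigma t).
split.
  move=> c Hc p.
  have [t [Ht E]] := Hc (size ps).
  have Ec : c = Cf by rewrite -E runE.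
  move=> N; exists (maxn N (size ps)); split; first exact: leq_maxl.
  by rewrite runE ?leq_maxr // Ec step_noF.
exists (size ps) => t Ht; rewrite runE //.
exists f; split; first by exists f.
split => // u v.
rewrite /out Hed /edg !in_setT /= Pedge /par' !feq.
by rewrite fr.
Qed.


Lemma INR_muln m k : INR (m * k) = Rmult (INR m) (INR k).
Proof. by rewrite mulnE mult_INR. Qed.
Lemma INR_subn m k : k <= m -> INR (m - k) = Rminus (INR m) (INR k).
Proof. by move=> H; rewrite subnE minus_INR //; apply/ssrnat.leP. Qed.
Lemma INR_expn m k : INR (m ^ k) = pow (INR m) k.
Proof. by elim: k => [//|k IH]; rewrite expnS INR_muln IH. Qed.

Lemma part3 : forall a : R, Rlt 0 a ->
     exists (c : R) (n0 : nat), Rlt 0 c /\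
       forall (n : nat) (l : 'I_n), 2 <= n -> n0 <= n ->
         forall T : nat, Rle (Rmult (Rmult c (INR n)) (ln (INR n))) (INR T) ->
           Rle (Rminus 1 (Rpower (INR n) (Ropp a))) (prob_stab l T).
Proof.
move=> a Ha; exists (Rmult 2 (Rplus a 2)), 2; split; first by Lra.lra.
move=> n l n2 _ T HT.
have H0 : 0 < n by lia.
have H1 : 1 < n by lia.
pose p0 : upair n := @exist _ (fun p : 'I_n * 'I_n => p.1 < p.2) (Ordinal H0, Ordinal H1) isT.
have Hb := bound_nat l p0 T.
set A := [set s : {ffun 'I_T -> upair n} | kk (Cs l s) < n] in Hb.
set good := [set s : {ffun 'I_T -> upair n} | `[< stab_by l T s >] ].
have Hsub : ~: good \subset A.
  apply/subsetP => s; rewrite !inE => Hs.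
  have := kk_le (Cs l s); rewrite leq_eqVlt => /orP[/eqP E|//].
  by move: Hs => /asboolPn; case; apply: stab_full.
have Hall : #|{ffun 'I_T -> upair n}| <= #|good| + #|A|.
  by rewrite -(cardsC good) leq_add2l subset_leq_card.
have HallE : #|{ffun 'I_T -> upair n}| = (#|{: upair n}| ^ T)%N by rewrite card_ffun card_ord.
set N := #|{: upair n}| in Hb HallE.
have HN : 0 < N by rewrite /N; apply/card_gt0P; exists p0.
rewrite /prob_stab -/good.
set g := #|good| in Hall *; set Ac := #|A| in Hb Hall.
set All := #|{ffun 'I_T -> upair n}| in Hall HallE *.
have HAll : Rlt 0 (INR All) by apply: lt_0_INR; apply/ssrnat.ltP; rewrite HallE expn_gt0 HN.
have Hr := @real_bound (INR n) a (INR N) (INR Ac) T.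
have Hx : Rle 2 (INR n) by have := le_INR 2 n (ssrnat.leP n2).
have Hb' : Rle (Rmult (Rmult (INR Ac) 2) (pow (Rmult 2 (INR n)) T)) (Rmult (Rmult (INR n) (Rminus (INR n) 1)) (pow (Rmult (INR N) (Rminus (Rmult 2 (INR n)) 1)) T)).
  have := le_INR _ _ (ssrnat.leP Hb).
  rewrite !INR_muln !INR_expn !INR_muln !INR_subn; try lia.
  by rewrite /= INR_muln /=.
have HAc := Hr Hx Ha (pos_INR _) (pos_INR _) Hb' HT.
have EAll : INR All = pow (INR N) T by rewrite HallE INR_expn.
rewrite -EAll in HAc.
have Hall' : Rle (INR All) (Rplus (INR g) (INR Ac)).
  by rewrite -plus_INR; apply: le_INR; apply/ssrnat.leP; rewrite plusE.
apply: (Rmult_le_reg_r (INR All)) => //.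
rewrite /Rdiv Rmult_assoc Rinv_l; last by apply: Rgt_not_eq.
Lra.nra.
Qed.

Theorem theorem1 :
  (* every fair execution stabilises to a graph of T (rooted at the leader) *)
  (forall (n : nat) (l : 'I_n), 2 <= n ->
     forall C : nat -> config n, execution l C -> fair C ->
       exists (G : rel 'I_n) (r : 'I_n), in_T G r /\ stabilises_to l C G r) /\
  (* every graph of T on n nodes is the stabilised output of some execution *)
  (forall (n : nat) (l : 'I_n), 2 <= n ->
     forall (G : rel 'I_n) (r : 'I_n), in_T G r ->
       exists C : nat -> config n, execution l C /\ fair C /\ stabilises_to l C G r) /\
  (* O(log n) parallel time with high probability *)
  (forall a : R, Rlt 0 a ->
     exists (c : R) (n0 : nat), Rlt 0 c /\
       forall (n : nat) (l : 'I_n), 2 <= n -> n0 <= n ->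
         forall T : nat, Rle (Rmult (Rmult c (INR n)) (ln (INR n))) (INR T) ->
           Rle (Rminus 1 (Rpower (INR n) (Ropp a))) (prob_stab l T)).

Proof.
split; first exact: part1.
split; first exact: part2.
exact: part3.
Qed.
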